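(* For some $n\geq 1$ there is a function $F:\mathcal{K}_n\times\mathcal{K}_n\to\mathbb{R}$ which satisfies (A1), (A2) and (A3) but does not satisfy the Cauchy–Schwarz axiom (A4); i.e. there exist $A,B\in\mathcal{K}_n$ with $F(A,B)^2> F(A,A)F(B,B)$ or with equality without $A=\lambda B$ for some $\lambda\ge 0$.
   Context: A convex body is a closed, bounded, non-empty convex subset of $\mathbb{R}^n$; $\mathcal{K}_n$ is the set of convex bodies in $\mathbb{R}^n$, with Minkowski addition and nonnegative scaling. The axioms for $F:\mathcal{K}_n\times\mathcal{K}_n\to\mathbb{R}$ are: (A1) $F(A,B)=F(B,A)$ for all $A,B$; (A2) $F(\alpha A+\beta B,C)=\alpha F(A,C)+\beta F(B,C)$ for all $\alpha,\beta\geq 0$ and $A,B,C\in\mathcal{K}_n$; (A3) $F(A,A)>0$ whenever $A\neq\{0\}$; (A4) $F(A,B)^2\leq F(A,A)F(B,B)$ for all $A,B$, with equality if and only if $A=\lambda B$ for some $\lambda\geq0$. *)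

(* Defs.v *)
From HB Require Import structures.
From mathcomp Require Import all_boot all_order all_algebra.
From mathcomp Require Import all_classical all_reals.
From mathcomp Require Import topology normedtype Rstruct Rstruct_topology.
Set Implicit Arguments. Unset Strict Implicit. Unset Printing Implicit Defensive.
Import Order.TTheory GRing.Theory Num.Theory.
Import numFieldNormedType.Exports.
Local Open Scope classical_set_scope.
Local Open Scope ring_scope.

(* Points of R^n are row vectors 'rV[R]_n, with the usual (sup-norm) topology;
   closedness and boundedness do not depend on the choice of norm. *)
Notation R := Rdefinitions.R.
Definition pt (n : nat) := 'rV[R]_n.

Definition convex_set (n : nat) (A : set (pt n)) : Prop :=
  forall x y (t : R), A x -> A y -> 0 <= t <= 1 -> A (t *: x + (1 - t) *: y).

Definition convex_body (n : nat) (A : set (pt n)) : Prop :=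
  [/\ closed A, bounded_set A, A !=set0 & convex_set A].

Definition mink_add (n : nat) (A B : set (pt n)) : set (pt n) :=
  [set x + y | x in A & y in B].
Definition mink_scale (n : nat) (a : R) (A : set (pt n)) : set (pt n) :=
  [set a *: x | x in A].

(* F is given as a function on all subsets; only its values on convex bodies
   matter (the axioms only quantify over convex bodies). *)
Definition axA1 (n : nat) (F : set (pt n) -> set (pt n) -> R) : Prop :=
  forall A B, convex_body A -> convex_body B -> F A B = F B A.

Definition axA2 (n : nat) (F : set (pt n) -> set (pt n) -> R) : Prop :=
  forall (a b : R) A B C, 0 <= a -> 0 <= b ->
    convex_body A -> convex_body B -> convex_body C ->
    F (mink_add (mink_scale a A) (mink_scale b B)) C = a * F A C + b * F B C.

Definition axA3 (n : nat) (F : set (pt n) -> set (pt n) -> R) : Prop :=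
  forall A, convex_body A -> A <> [set 0] -> 0 < F A A.

Definition axA4 (n : nat) (F : set (pt n) -> set (pt n) -> R) : Prop :=
  forall A B, convex_body A -> convex_body B ->
    F A B ^+ 2 <= F A A * F B B /\
    (F A B ^+ 2 = F A A * F B B <->
       exists lam : R, 0 <= lam /\ A = mink_scale lam B).

(* Main.v *)
Require Import Defs.
From HB Require Import structures.
From mathcomp Require Import all_boot all_order all_algebra.
From mathcomp Require Import all_classical all_reals.
From mathcomp Require Import topology normedtype Rstruct Rstruct_topology.
From mathcomp Require Import ring lra.
Import Order.TTheory GRing.Theory Num.Theory.
Import numFieldNormedType.Exports.
Set Implicit Arguments. Unset Strict Implicit.
Local Open Scope classical_set_scope.
Local Open Scope ring_scope.

Lemma sup_scale (E : set R) (a : R) : 0 <= a -> has_sup E ->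
  sup [set a * x | x in E] = a * sup E.
Proof.
move=> a0 [[e Ee] [M HM]].
have hsE : has_sup E by split; [exists e | exists M].
have ne : [set a * x | x in E] !=set0 by exists (a * e), e.
have ub : has_ubound [set a * x | x in E].
  by exists (a * M) => _ [x Ex <-]; rewrite ler_wpM2l // HM.
have [->|ap] := eqVneq a 0.
  rewrite mul0r.
  have -> : [set 0 * x | x in E] = [set 0].
    by apply/seteqP; split => [_ [x _ <-]|_ ->] /=; [rewrite mul0r | exists e => //; rewrite mul0r].
  by rewrite sup1.
have apos : 0 < a by rewrite lt_neqAle eq_sym ap.
apply/eqP; rewrite eq_le; apply/andP; split.
  apply: ge_sup; first exact: ne.
  move=> y [x Ex <-]; rewrite ler_wpM2l //.
  by apply: ub_le_sup => //; exists M.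
rewrite -ler_pdivlMl //; apply: ge_sup; first by exists e.
move=> x Ex; rewrite ler_pdivlMl //; apply: ub_le_sup => //; by exists x.
Qed.

Lemma ltrDl_ltr01 (M : R) : M < M + 1. Proof. by rewrite ltrDl ltr01. Qed.

Lemma bounded_proj (A : set (pt 1)) (phi : pt 1 -> R) :
  (forall x, `|phi x| <= `|x|) -> bounded_set A -> A !=set0 ->
  has_sup (phi @` A).
Proof.
move=> hphi bA [e Ae]; split; first by exists (phi e), e.
have [M [_ HM]] := bA.
exists (M + 1) => _ [x Ax <-].
have := HM (M + 1) (ltrDl_ltr01 M) x Ax => /= h.
exact: le_trans (ler_norm _) (le_trans (hphi x) h).
Qed.

Lemma has_sup_scale (E : set R) (a : R) : 0 <= a -> has_sup E ->
  has_sup [set a * x | x in E].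
Proof.
move=> a0 [[e Ee] [M HM]]; split; first by exists (a * e), e.
by exists (a * M) => _ [x Ex <-]; rewrite ler_wpM2l // HM.
Qed.

Definition S (phi : pt 1 -> R) (A : set (pt 1)) := sup (phi @` A).

Lemma S_mink (phi : pt 1 -> R) (a b : R) (A B : set (pt 1)) :
  (forall x, `|phi x| <= `|x|) ->
  (forall a b x y, phi (a *: x + b *: y) = a * phi x + b * phi y) ->
  0 <= a -> 0 <= b -> convex_body A -> convex_body B ->
  S phi (mink_add (mink_scale a A) (mink_scale b B)) = a * S phi A + b * S phi B.
Proof.
move=> hb hl a0 b0 [_ bA nA _] [_ bB nB _].
have hA := bounded_proj hb bA nA.
have hB := bounded_proj hb bB nB.
rewrite /S -(sup_scale a0 hA) -(sup_scale b0 hB) -sup_sumE;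
  try exact: has_sup_scale.
congr sup; apply/seteqP; split.
  move=> _ [_ [_ [x Ax <-] [_ [y By <-] <-]] <-].
  exists (a * phi x); first by exists (phi x) => //; exists x.
  by exists (b * phi y); [exists (phi y) => //; exists y | rewrite hl].
move=> _ [_ [_ [x Ax <-] <-] [_ [_ [y By <-] <-] <-]].
exists (a *: x + b *: y); last by rewrite hl.
by exists (a *: x); [exists x | exists (b *: y); [exists y|]].
Qed.

Lemma norm00 (x : pt 1) : `|x ord0 ord0| <= `|x|.
Proof.
have -> : `|x| = mx_norm x by [].
by rewrite mx_normrE (bigD1 (ord0, ord0)) //= le_max lexx.
Qed.

Definition p1 (x : pt 1) : R := x ord0 ord0.
Definition p2 (x : pt 1) : R := - x ord0 ord0.

Lemma p1b x : `|p1 x| <= `|x|. Proof. exact: norm00. Qed.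
Lemma p2b x : `|p2 x| <= `|x|. Proof. by rewrite /p2 normrN; exact: norm00. Qed.
Lemma p1l a b x y : p1 (a *: x + b *: y) = a * p1 x + b * p1 y.
Proof. by rewrite /p1 !mxE. Qed.
Lemma p2l a b x y : p2 (a *: x + b *: y) = a * p2 x + b * p2 y.
Proof. by rewrite /p2 !mxE opprD -!mulrN. Qed.

Definition FF (A B : set (pt 1)) : R := S p1 A * S p1 B + S p2 A * S p2 B.

Lemma S1 phi (e : pt 1) : S phi [set e] = phi e.
Proof. by rewrite /S image_set1 sup1. Qed.

Lemma cb1 (e : pt 1) : convex_body [set e].
Proof.
split.
- apply: compact_closed; last exact: (@compact_set1 _ e).
  exact: norm_hausdorff.
- by have := (@compact_bounded R _ [set e] (@compact_set1 _ e)).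
- by exists e.
- by move=> x y t -> -> _; rewrite -scalerDl subrKC scale1r.
Qed.

Lemma ub_S phi (A : set (pt 1)) x :
  (forall x, `|phi x| <= `|x|) -> convex_body A -> A x -> phi x <= S phi A.
Proof.
move=> hb [_ bA nA _] Ax; have [_ ub] := bounded_proj hb bA nA.
by apply: ub_le_sup => //; exists x.
Qed.

Theorem proposition1 :
  exists (n : nat) (F : set (pt n) -> set (pt n) -> R),
    (1 <= n)%N /\ axA1 F /\ axA2 F /\ axA3 F /\
    exists A B : set (pt n), convex_body A /\ convex_body B /\
      (F A A * F B B < F A B ^+ 2 \/
       (F A B ^+ 2 = F A A * F B B /\
        ~ (exists lam : R, 0 <= lam /\ A = mink_scale lam B))).
Proof.
exists 1%N, FF; split => //; split.
  by move=> A B _ _; rewrite /FF mulrC (mulrC (S p2 A)).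
split.
  move=> a b A B C a0 b0 hA hB hC; rewrite /FF.
  rewrite (S_mink p1b p1l) // (S_mink p2b p2l) //; ring.
split.
  move=> A hA hA0; rewrite /FF.
  have [h1|h1] := eqVneq (S p1 A) 0; have [h2|h2] := eqVneq (S p2 A) 0.
  - exfalso; apply: hA0.
    have z : forall x, A x -> x = 0.
      move=> x Ax; have := ub_S p1b hA Ax; have := ub_S p2b hA Ax.
      rewrite h1 h2 /p1 /p2 => q1 q2.
      apply/rowP => i; rewrite (ord1 i) !mxE; lra.
    case: hA => _ _ [e Ae] _.
    apply/seteqP; split => x /=; first exact: z.
    by move=> ->; rewrite -(z e Ae).
  - have : 0 < S p2 A * S p2 A by rewrite -expr2 lt_def sqrf_eq0 h2 sqr_ge0.
    by rewrite h1; lra.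
  - have : 0 < S p1 A * S p1 A by rewrite -expr2 lt_def sqrf_eq0 h1 sqr_ge0.
    by rewrite h2; lra.
  - have : 0 < S p2 A * S p2 A by rewrite -expr2 lt_def sqrf_eq0 h2 sqr_ge0.
    have : 0 <= S p1 A * S p1 A by rewrite -expr2 sqr_ge0.
    lra.
pose e : pt 1 := const_mx 1.
exists [set e], [set - e]; split; first exact: cb1.
split; first exact: cb1.
right; rewrite /FF !S1 /p1 /p2 !mxE; split; first lra.
case=> lam [l0 /seteqP [H _]].
have [x /= -> /(congr1 (fun m : pt 1 => m ord0 ord0))] := H e erefl.
rewrite !mxE; lra.
Qed.
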